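(* Let $\mathcal{A}$ be an abelian category. (1) Assume that $\mathcal{A}$ has coproducts, let $M$ be a finitely generated object of $\mathcal{A}$ and let $(N_i)_{i\in I}$ be a family of objects of $\mathcal{A}$. Then $\bigoplus_{i\in I} N_i$ is strongly $M$-Rickart if and only if $N_i$ is strongly $M$-Rickart for every $i\in I$. (2) Assume that $\mathcal{A}$ has products, let $N$ be a finitely cogenerated object of $\mathcal{A}$ and let $(M_i)_{i\in I}$ be a family of objects of $\mathcal{A}$ such that $N$ is dual strongly $M_i$-Rickart for every $i\in I$. Then $N$ is dual strongly $\prod_{i\in I} M_i$-Rickart if and only if $N$ is dual strongly $M_i$-Rickart for every $i\in I$.
   Context: Finitely generated and finitely cogenerated objects are meant in the usual categorical sense (in particular, every morphism from a finitely generated object $M$ to a coproduct $\bigoplus_{i\in I}N_i$ factors through $\bigoplus_{i\in F}N_i$ for some finite $F\subseteq I$, and dually for finitely cogenerated objects and products). A morphism $f:X\to Y$ is a section if $f'f=1_X$ for some $f'$, a retraction if $ff'=1_Y$ for some $f'$. A monomorphism $k:K\to X$ is fully invariant if for every $h:X\to X$ there is $\alpha:K\to K$ with $hk=k\alpha$; an epimorphism $c:X\to C$ is fully coinvariant if for every $h:X\to X$ there is $\gamma:C\to C$ with $ch=\gamma c$. For objects $M,N$: $N$ is strongly $M$-Rickart if the kernel of every morphism $f:M\to N$ is a fully invariant section; $N$ is dual strongly $M$-Rickart if the cokernel of every morphism $f:M\to N$ is a fully coinvariant retraction. *)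

(* Defs.v *)
From mathcomp Require Import all_boot all_algebra.
Set Implicit Arguments. Unset Strict Implicit. Unset Printing Implicit Defensive.
Import GRing.Theory.
Local Open Scope ring_scope.

(* A preadditive category: hom-sets are abelian groups and composition
   (comp g f = "g after f") is bilinear. *)
Record PreAdditive : Type := {
  Obj :> Type;
  Mor : Obj -> Obj -> zmodType;
  comp : forall A B C : Obj, Mor B C -> Mor A B -> Mor A C;
  idm : forall A : Obj, Mor A A;
  compA : forall A B C D (h : Mor C D) (g : Mor B C) (f : Mor A B),
      comp h (comp g f) = comp (comp h g) f;
  comp1m : forall A B (f : Mor A B), comp (idm B) f = f;
  compm1 : forall A B (f : Mor A B), comp f (idm A) = f;
  compDl : forall A B C (g1 g2 : Mor B C) (f : Mor A B),
      comp (g1 + g2) f = comp g1 f + comp g2 f;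
  compDr : forall A B C (g : Mor B C) (f1 f2 : Mor A B),
      comp g (f1 + f2) = comp g f1 + comp g f2
}.
Arguments Mor {p}.
Arguments comp {p A B C}.
Arguments idm {p}.

Section Cat.
Variable C : PreAdditive.

Definition mono (A B : C) (f : Mor A B) : Prop :=
  forall Z (g h : Mor Z A), comp f g = comp f h -> g = h.
Definition epi (A B : C) (f : Mor A B) : Prop :=
  forall Z (g h : Mor B Z), comp g f = comp h f -> g = h.

Definition is_kernel (A B K : C) (f : Mor A B) (k : Mor K A) : Prop :=
  comp f k = 0 /\
  forall Z (g : Mor Z A), comp f g = 0 ->
    exists u : Mor Z K, comp k u = g /\ forall v : Mor Z K, comp k v = g -> v = u.

Definition is_cokernel (A B Q : C) (f : Mor A B) (c : Mor B Q) : Prop :=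
  comp c f = 0 /\
  forall Z (g : Mor B Z), comp g f = 0 ->
    exists u : Mor Q Z, comp u c = g /\ forall v : Mor Q Z, comp v c = g -> v = u.

Definition is_zero_object (Z : C) : Prop :=
  forall X : C, (forall f g : Mor Z X, f = g) /\ (forall f g : Mor X Z, f = g).

Definition is_binproduct (A B P : C) (p1 : Mor P A) (p2 : Mor P B) : Prop :=
  forall Z (f1 : Mor Z A) (f2 : Mor Z B),
    exists u : Mor Z P, (comp p1 u = f1 /\ comp p2 u = f2) /\
      forall v : Mor Z P, comp p1 v = f1 -> comp p2 v = f2 -> v = u.

Definition is_abelian : Prop :=
  (exists Z : C, is_zero_object Z) /\
  (forall A B : C, exists P (p1 : Mor P A) (p2 : Mor P B), is_binproduct p1 p2) /\
  (forall (A B : C) (f : Mor A B), exists K (k : Mor K A), is_kernel f k) /\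
  (forall (A B : C) (f : Mor A B), exists Q (c : Mor B Q), is_cokernel f c) /\
  (forall (A B : C) (m : Mor A B), mono m ->
      exists Q (g : Mor B Q), is_kernel g m) /\
  (forall (A B : C) (e : Mor A B), epi e ->
      exists K (g : Mor K A), is_cokernel g e).

Definition is_coproduct (I : Type) (N : I -> C) (S : C)
    (iota : forall i, Mor (N i) S) : Prop :=
  forall Z (f : forall i, Mor (N i) Z),
    exists u : Mor S Z, (forall i, comp u (iota i) = f i) /\
      forall v : Mor S Z, (forall i, comp v (iota i) = f i) -> v = u.

Definition is_product (I : Type) (M : I -> C) (P : C)
    (pi : forall i, Mor P (M i)) : Prop :=
  forall Z (f : forall i, Mor Z (M i)),
    exists u : Mor Z P, (forall i, comp (pi i) u = f i) /\
      forall v : Mor Z P, (forall i, comp (pi i) v = f i) -> v = u.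

Definition has_coproducts : Prop :=
  forall (I : Type) (N : I -> C), exists S (iota : forall i, Mor (N i) S),
    @is_coproduct I N S iota.

Definition has_products : Prop :=
  forall (I : Type) (M : I -> C), exists P (pi : forall i, Mor P (M i)),
    @is_product I M P pi.

(* Finitely generated: every morphism M -> (coproduct of N_i, i in I) factors
   through the canonical morphism from the coproduct of the N_i, i in F, for
   some finite F ⊆ I (F given as the image of an injective s : 'I_n -> I). *)
Definition finitely_generated (M : C) : Prop :=
  forall (I : Type) (N : I -> C) (S : C) (iota : forall i, Mor (N i) S),
    @is_coproduct I N S iota ->
    forall f : Mor M S,
      exists (n : nat) (s : 'I_n -> I) (T : C)
             (j : forall k : 'I_n, Mor (N (s k)) T) (u : Mor T S) (h : Mor M T),
        [/\ injective s, @is_coproduct 'I_n (fun k => N (s k)) T j,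
            forall k, comp u (j k) = iota (s k)
          & f = comp u h].

Definition finitely_cogenerated (N : C) : Prop :=
  forall (I : Type) (M : I -> C) (P : C) (pi : forall i, Mor P (M i)),
    @is_product I M P pi ->
    forall f : Mor P N,
      exists (n : nat) (s : 'I_n -> I) (T : C)
             (q : forall k : 'I_n, Mor T (M (s k))) (u : Mor P T) (h : Mor T N),
        [/\ injective s, @is_product 'I_n (fun k => M (s k)) T q,
            forall k, comp (q k) u = pi (s k)
          & f = comp h u].

Definition section (A B : C) (f : Mor A B) : Prop :=
  exists f' : Mor B A, comp f' f = idm A.
Definition retraction (A B : C) (f : Mor A B) : Prop :=
  exists f' : Mor B A, comp f f' = idm B.

Definition fully_invariant (K X : C) (k : Mor K X) : Prop :=
  forall h : Mor X X, exists alpha : Mor K K, comp h k = comp k alpha.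
Definition fully_coinvariant (X Q : C) (c : Mor X Q) : Prop :=
  forall h : Mor X X, exists gamma : Mor Q Q, comp c h = comp gamma c.

(* strongly_rickart M N  <->  N is strongly M-Rickart *)
Definition strongly_rickart (M N : C) : Prop :=
  forall (f : Mor M N) (K : C) (k : Mor K M), is_kernel f k ->
    mono k /\ fully_invariant k /\ section k.

(* dual_strongly_rickart M N  <->  N is dual strongly M-Rickart *)
Definition dual_strongly_rickart (M N : C) : Prop :=
  forall (f : Mor M N) (Q : C) (c : Mor N Q), is_cokernel f c ->
    epi c /\ fully_coinvariant c /\ retraction c.

End Cat.
Arguments is_coproduct {C} I N S iota.
Arguments is_product {C} I M P pi.

(* Main.v *)
Require Import Defs.
From mathcomp Require Import all_boot all_algebra.
From Stdlib Require Import ClassicalEpsilon ProofIrrelevance.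
Set Implicit Arguments. Unset Strict Implicit. Unset Printing Implicit Defensive.
Import GRing.Theory.
Local Open Scope ring_scope.
Local Notation comp := Defs.comp.
Local Notation compA := Defs.compA.

Section Gen.
Variable C : PreAdditive.

Lemma comp0m (A B D : C) (f : Mor A B) : comp (0 : Mor B D) f = 0.
Proof. by apply: (addrI (comp (0 : Mor B D) f)); rewrite -compDl !addr0. Qed.
Lemma compm0 (A B D : C) (g : Mor B D) : comp g (0 : Mor A B) = 0.
Proof. by apply: (addrI (comp g (0 : Mor A B))); rewrite -compDr !addr0. Qed.

Lemma comp_suml (A B D : C) n (F : 'I_n -> Mor B D) (f : Mor A B) :
  comp (\sum_(i < n) F i) f = \sum_(i < n) comp (F i) f.
Proof.
exact: (big_morph (fun g => comp g f) (fun a b => compDl a b f) (comp0m _ _)).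
Qed.
Lemma comp_sumr (A B D : C) n (F : 'I_n -> Mor A B) (g : Mor B D) :
  comp g (\sum_(i < n) F i) = \sum_(i < n) comp g (F i).
Proof.
exact: (big_morph (fun f => comp g f) (fun a b => compDr g a b) (compm0 _ _)).
Qed.

Lemma kernel_mono (A B K : C) (f : Mor A B) (k : Mor K A) :
  is_kernel f k -> mono k.
Proof.
move=> [fk0 Hk] Z g h Hgh.
have Hg : comp f (comp k g) = 0 by rewrite compA fk0 comp0m.
have [u [_ Hu]] := Hk Z _ Hg.
by rewrite (Hu g erefl) (Hu h (esym Hgh)).
Qed.

Definition projF (I : Type) (N : I -> C) (i j : I) : Mor (N j) (N i) :=
  match excluded_middle_informative (j = i) with
  | left e => match e in _ = y return Mor (N j) (N y) with erefl => idm (N j) end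
  | right _ => 0
  end.

Lemma projF_eq (I : Type) (N : I -> C) i : projF N i i = idm (N i).
Proof.
rewrite /projF; case: excluded_middle_informative => [e|ne] //.
by rewrite (proof_irrelevance _ e erefl).
Qed.
Lemma projF_neq (I : Type) (N : I -> C) i j : j <> i -> projF N i j = 0.
Proof. by rewrite /projF; case: excluded_middle_informative. Qed.

Lemma coprod_proj (I : Type) (N : I -> C) S (iota : forall i, Mor (N i) S) :
  is_coproduct I N S iota -> forall i, { p : Mor S (N i) |
    comp p (iota i) = idm _ /\ forall j, j <> i -> comp p (iota j) = 0 }.
Proof.
move=> H i.
have [p [Hp _]] := constructive_indefinite_description _ (H (N i) (projF N i)).
exists p; split; first by rewrite Hp projF_eq.
by move=> j ne; rewrite Hp projF_neq.
Qed.

Lemma core (M X K : C) (f : Mor M X) (k0 : Mor K M) n (Y : 'I_n -> C)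
  (g : forall k, Mor M (Y k)) (e : 'I_n -> Mor M M) :
  is_kernel f k0 ->
  (forall k, comp (g k) (e k) = 0) ->
  (forall k Z (x : Mor Z M), comp (g k) x = 0 -> comp (e k) x = x) ->
  (forall k (phi : Mor M M), comp phi (e k) = comp (e k) (comp phi (e k))) ->
  (forall Z (x : Mor Z M), (forall k, comp (g k) x = 0) -> comp f x = 0) ->
  (forall k Z (x : Mor Z M), comp f x = 0 -> comp (g k) x = 0) ->
  mono k0 /\ fully_invariant k0 /\ section k0.
Proof.
move=> Hker Ha Hb Hc Hd Hd'.
have Hmono := kernel_mono Hker.
have [fk0 Hk] := Hker.
have ek0 : forall k, comp (e k) k0 = k0 by move=> k; apply: Hb; apply: Hd'.
split => //; split.
  move=> phi; have Hf : comp f (comp phi k0) = 0.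
    apply: Hd => k; rewrite -(ek0 k) (compA phi) (Hc k phi) -(compA (e k)) compA Ha comp0m //.
  by have [u [Hu _]] := Hk _ _ Hf; exists u; rewrite Hu.
pose E (l : seq 'I_n) := foldr (fun k acc => comp (e k) acc) (idm M) l.
have L1 : forall l k, k \in l -> comp (g k) (E l) = 0.
  elim=> [|a l IH] k //=; rewrite inE => /orP [/eqP->|kl].
    by rewrite compA Ha comp0m.
  have Hl : comp (e k) (E l) = E l by apply: Hb; apply: IH.
  by rewrite -Hl (compA (e a)) (Hc k (e a)) -(compA (e k)) compA compA Ha !comp0m.
have L2 : forall l, comp (E l) k0 = k0.
  elim=> [|a l IH] /=; first by rewrite comp1m.
  by rewrite -compA IH ek0.
have Hf : comp f (E (enum 'I_n)) = 0 by apply: Hd => k; apply: L1; rewrite mem_enum.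
have [r [Hr _]] := Hk _ _ Hf.
exists r; apply: Hmono; rewrite compA Hr L2 compm1 //.
Qed.

Lemma part1 (Hker : forall (A B : C) (f : Mor A B), exists K (k : Mor K A), is_kernel f k)
  (M : C) (fg : finitely_generated M) (I : Type) (N : I -> C) (S : C)
  (iota : forall i, Mor (N i) S) (Hc : is_coproduct I N S iota) :
  strongly_rickart M S <-> forall i, strongly_rickart M (N i).
Proof.
pose p i := proj1_sig (coprod_proj Hc i).
have Hp1 i : comp (p i) (iota i) = idm _ by case: (proj2_sig (coprod_proj Hc i)).
have Hp0 i j : j <> i -> comp (p i) (iota j) = 0.
  by move=> ji; case: (proj2_sig (coprod_proj Hc i)) => _ ->.
split.
  move=> HS i f K k0 Hk0; apply: (HS (comp (iota i) f)).
  have [fk0 Hk] := Hk0; split; first by rewrite -compA fk0 compm0.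
  move=> Z x Hx; apply: Hk.
  by rewrite -(comp1m (comp f x)) -(Hp1 i) -compA (compA (iota i)) Hx compm0.
move=> HN f K k0 Hk0.
have [n [s [T [j [u [h [sinj HT Hju fE]]]]]]] := fg I N S iota Hc f.
subst f.
pose g k := comp (p (s k)) (comp u h).
have He : forall k, exists e : Mor M M,
   [/\ comp (g k) e = 0,
       (forall Z (x : Mor Z M), comp (g k) x = 0 -> comp e x = x) &
       (forall (phi : Mor M M), comp phi e = comp e (comp phi e))].
  move=> k; have [Kk [kap Hkap]] := Hker _ _ (g k).
  have [_ [Hfi [r Hr]]] := HN (s k) (g k) Kk kap Hkap.
  have [gk Hkk] := Hkap.
  exists (comp kap r); split.
  - by rewrite compA gk comp0m.
  - move=> Z x Hx; have [v [Hv _]] := Hkk Z x Hx.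
    by rewrite -Hv -!compA (compA r) Hr comp1m.
  - move=> phi; have [al Hal] := Hfi phi.
    by rewrite !(compA phi kap r) Hal -!compA (compA r kap) Hr comp1m.
pose e k := proj1_sig (constructive_indefinite_description _ (He k)).
have Tid : \sum_(k < n) comp (j k) (comp (p (s k)) u) = idm T.
  have [w [_ Hw]] := HT T j.
  have E1 : idm T = w by apply: Hw => m; rewrite comp1m.
  rewrite E1; apply: Hw => m.
  rewrite comp_suml (bigD1 m) //= -!compA Hju Hp1 compm1 big1 ?addr0 //.
  move=> k km; rewrite -!compA Hju Hp0 ?compm0 //.
  by move=> /sinj E; rewrite E eqxx in km.
apply: (core (g := g) (e := e) Hk0).
- by move=> k; case: (proj2_sig (constructive_indefinite_description _ (He k))).
- by move=> k; case: (proj2_sig (constructive_indefinite_description _ (He k))).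
- by move=> k; case: (proj2_sig (constructive_indefinite_description _ (He k))).
- move=> Z x Hx.
  rewrite -(comp1m h) -Tid comp_suml comp_sumr comp_suml big1 // => k _.
  have := Hx k; rewrite /g -!compA => ->; by rewrite !compm0.
- by move=> k Z x Hx; rewrite /g -compA Hx compm0.
Qed.

End Gen.

Definition opC (C : PreAdditive) : PreAdditive :=
  {| Obj := C;
     Mor := fun A B => Mor B A;
     comp := fun A B D g f => Defs.comp f g;
     idm := fun A => idm A;
     compA := fun A B D E h g f => esym (Defs.compA f g h);
     comp1m := fun A B f => compm1 f;
     compm1 := fun A B f => comp1m f;
     compDl := fun A B D g1 g2 f => compDr f g1 g2;
     compDr := fun A B D g f1 f2 => compDl f1 f2 g |}.

Theorem corollary3p2 (A : PreAdditive) (HA : is_abelian A) :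
  (has_coproducts A ->
   forall (M : A), finitely_generated M ->
   forall (I : Type) (N : I -> A) (S : A) (iota : forall i, Mor (N i) S),
     is_coproduct I N S iota ->
     (strongly_rickart M S <-> forall i, strongly_rickart M (N i)))
  /\
  (has_products A ->
   forall (N : A), finitely_cogenerated N ->
   forall (I : Type) (M : I -> A) (P : A) (pi : forall i, Mor P (M i)),
     is_product I M P pi ->
     (forall i, dual_strongly_rickart (M i) N) ->
     (dual_strongly_rickart P N <-> forall i, dual_strongly_rickart (M i) N)).
Proof.
have [_ [_ [Hker [Hcok _]]]] := HA.
split.
  move=> _ M fg I N S iota Hc; exact: (part1 Hker fg Hc).
move=> _ N fc I M P pi Hp _.
exact: (@part1 (opC A) (fun X Y f => Hcok Y X f) N fc I M P pi Hp).
Qed.
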